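(* Let $\varPhi$ be a family of open intervals contained in $[0,1]$. Suppose there is $C>0$ such that for every interval $(a,b)\subset[0,1]$ there exists $\varDelta(a,b)\in\varPhi$ with (a) $\frac{a+b}{2}\in\varDelta(a,b)$, (b) $\varDelta(a,b)\subset(a,b)$, (c) $\frac{b-a}{|\varDelta(a,b)|}\le C$. Then $\varPhi$ is faithful for packing dimension calculation, i.e. $\dim_{P}(E,\varPhi)=\dim_{P(\mathit{unc})}(E)$ for every $E\subset[0,1]$.
   Context: Work in $\mathbb R$ with the usual metric; $|A|$ is the length (diameter). An uncentered $\varepsilon$-packing of $E$ is a finite or countable family of pairwise disjoint open intervals $E_i$ with $|E_i|\le\varepsilon$ and $E_i\cap E\ne\varnothing$. For $\alpha\ge0$: $\mathcal P^\alpha_{\varepsilon(\mathit{unc})}(E)=\sup\sum_i|E_i|^\alpha$ over uncentered $\varepsilon$-packings; $\mathcal P^\alpha_{0(\mathit{unc})}=\lim_{\varepsilon\to0}\mathcal P^\alpha_{\varepsilon(\mathit{unc})}$; $\mathcal P^\alpha_{(\mathit{unc})}(E)=\inf\{\sum_j\mathcal P^\alpha_{0(\mathit{unc})}(E_j):E\subset\bigcup_jE_j\}$ over countable covers; $\dim_{P(\mathit{unc})}(E)=\inf\{\alpha:\mathcal P^\alpha_{(\mathit{unc})}(E)=0\}$. $\dim_P(E,\varPhi)$ is defined identically but using only uncentered packings by intervals from $\varPhi$ (empty packing gives $0$). *)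

(* Defs.v *)
From HB Require Import structures.
From mathcomp Require Import all_boot all_order all_algebra.
From mathcomp Require Import all_classical all_reals all_analysis.
Set Implicit Arguments. Unset Strict Implicit. Unset Printing Implicit Defensive.
Import Order.TTheory GRing.Theory Num.Theory.
Import numFieldNormedType.Exports.
Local Open Scope classical_set_scope.
Local Open Scope ring_scope.

(* A (finite or countable) family of intervals is a sequence
   nat -> option (R*R); None entries are "absent" (this encodes finite
   families, including the empty one). *)

Definition open_itv {R : realType} (I : R * R) : set R :=
  [set x | I.1 < x < I.2].

Definition unc_packing {R : realType} (Phi : set (R * R)) (E : set R)
  (eps : R) (P : nat -> option (R * R)) : Prop :=
  (forall i I, P i = Some I ->
     [/\ Phi I, I.1 < I.2, I.2 - I.1 <= eps & open_itv I `&` E !=set0]) /\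
  (forall i j I J, i <> j -> P i = Some I -> P j = Some J ->
     open_itv I `&` open_itv J = set0).

Definition packing_sum {R : realType} (alpha : R) (P : nat -> option (R * R))
  : \bar R :=
  (\sum_(0 <= i <oo)
     (match P i with Some K => ((K.2 - K.1) `^ alpha)%:E | None => 0%E end))%E.

Definition Peps {R : realType} (Phi : set (R * R)) (alpha eps : R)
  (E : set R) : \bar R :=
  ereal_sup [set packing_sum alpha P | P in unc_packing Phi E eps].

Definition P0 {R : realType} (Phi : set (R * R)) (alpha : R) (E : set R)
  : \bar R :=
  lim (Peps Phi alpha ^~ E @ 0^'+).

Definition Pmeas {R : realType} (Phi : set (R * R)) (alpha : R) (E : set R)
  : \bar R :=
  ereal_inf [set (\sum_(0 <= j <oo) P0 Phi alpha (F j))%E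
            | F in [set F : nat -> set R | E `<=` \bigcup_j F j]].

Definition dimP {R : realType} (Phi : set (R * R)) (E : set R) : \bar R :=
  ereal_inf [set alpha%:E | alpha in [set alpha : R | 0 <= alpha /\
                                          Pmeas Phi alpha E = 0%E]].

Definition all_itvs {R : realType} : set (R * R) := setT.
Definition dimP_unc {R : realType} (E : set R) : \bar R := dimP all_itvs E.

(* Main.v *)
Require Import Defs.
From HB Require Import structures.
From mathcomp Require Import all_boot all_order all_algebra.
From mathcomp Require Import all_classical all_reals all_analysis.
Import Order.TTheory GRing.Theory Num.Theory.
Local Open Scope classical_set_scope.
Local Open Scope ring_scope.
From mathcomp Require Import ring lra.
Section S.
Variable R : realType.
Implicit Types (Phi : set (R*R)) (E : set R).
Local Open Scope ereal_scope.

Lemma psum_ge0 (a : R) P : 0 <= packing_sum a P.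
Proof. by apply: nneseries_ge0 => n _ _; case: (P n) => // K; rewrite lee_fin powR_ge0. Qed.

Lemma Peps_ge0 Phi (a e : R) E : 0 <= Peps Phi a e E.
Proof.
apply: le_ereal_sup_tmp; exists 0 => //; exists (fun=> None) => //.
by rewrite /packing_sum eseries0.
Qed.

Lemma Peps_mono Phi Phi' (a e e' : R) E E' : Phi `<=` Phi' -> E `<=` E' -> (e <= e')%R ->
  Peps Phi a e E <= Peps Phi' a e' E'.
Proof.
move=> sP sE ee; apply/ereal_supP => _ [P [HP1 HP2] <-].
apply: le_ereal_sup_tmp; exists (packing_sum a P) => //; exists P => //; split => //.
move=> i I /HP1 [h1 h2 h3 [x [x1 x2]]]; split => //; first exact: sP.
  exact: le_trans ee.
by exists x; split => //; apply: sE.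
Qed.

Lemma P0E Phi (a : R) E : P0 Phi a E = ereal_inf [set Peps Phi a e E | e in [set e : R | (0 < e)%R]].
Proof.
rewrite /P0; apply: cvg_lim => //.
have -> : [set Peps Phi a e E | e in [set e : R | (0 < e)%R]] =
   (Peps Phi a ^~ E) @` [set` Interval (BRight 0%R) (BInfty _ false)].
  by congr image; apply/seteqP; split => x /=; rewrite in_itv/= andbT.
apply: nondecreasing_at_right_cvge => //.
by move=> x y _ _ xy; apply: Peps_mono.
Qed.

Lemma P0_ge0 Phi (a : R) E : 0 <= P0 Phi a E.
Proof. by rewrite P0E; apply/ereal_infP => _ [e _ <-]; apply: Peps_ge0. Qed.

Lemma P0_mono Phi Phi' (a : R) E E' : Phi `<=` Phi' -> E `<=` E' ->
  P0 Phi a E <= P0 Phi' a E'.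
Proof.
move=> sP sE; rewrite !P0E; apply/ereal_infP => _ [e e0 <-].
by apply: ge_ereal_inf; exists (Peps Phi a e E) => //; [exists e | apply: Peps_mono].
Qed.

Lemma Pmeas_ge0 Phi (a : R) E : 0 <= Pmeas Phi a E.
Proof.
apply/ereal_infP => _ [F _ <-]; apply: nneseries_ge0 => n _ _; exact: P0_ge0.
Qed.

Lemma Pmeas_mono Phi Phi' (a : R) E : Phi `<=` Phi' -> Pmeas Phi a E <= Pmeas Phi' a E.
Proof.
move=> sP; apply/ereal_infP => _ [F FE <-].
apply: ge_ereal_inf; exists (\sum_(0 <= j <oo) P0 Phi a (F j)); first by exists F.
by apply: lee_nneseries => n *; [exact: P0_ge0 | exact: P0_mono].
Qed.

Lemma term_le_series (u : nat -> \bar R) j : (forall n, 0 <= u n) ->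
  u j <= \sum_(0 <= n <oo) u n.
Proof.
move=> u0; apply: le_trans (nneseries_lim_ge j.+1 (fun n _ _ => u0 n)).
rewrite big_nat_recr //= leeDr //; exact: sume_ge0.
Qed.

End S.


Section F.
Variable R : realType.

Lemma fiber (N : nat) (T : pred nat) (u v : nat -> R) (l a b : R) : 0 < l -> a <= b ->
 (forall i, (i < N)%N -> T i -> [/\ a <= u i, u i + l <= v i & v i <= b]) ->
 (forall i j, (i < N)%N -> (j < N)%N -> T i -> T j -> i <> j -> v i <= u j \/ v j <= u i) ->
 \sum_(0 <= i < N | T i) l <= b - a.
Proof.
move=> l0; elim: N T a b => [|N IH] T a b ab H1 H2; first by rewrite big_geq // subr_ge0.
rewrite big_mkcond big_nat_recr //= -big_mkcond /=.
have H1' i : (i < N)%N -> T i -> [/\ a <= u i, u i + l <= v i & v i <= b].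
  by move=> iN; apply: H1; rewrite ltnS ltnW.
have H2' i j : (i < N)%N -> (j < N)%N -> T i -> T j -> i <> j -> v i <= u j \/ v j <= u i.
  by move=> iN jN; apply: H2; rewrite ltnS ltnW.
case: ifP => TN; last first.
  by rewrite addr0; apply: IH.
have [aU UV Vb] := H1 N (ltnSn N) TN.
rewrite (bigID (fun i => v i <= u N)) /=.
have L1 : \sum_(0 <= i < N | T i && (v i <= u N)) l <= u N - a.
  apply: IH => //.
    move=> i iN /andP[Ti vU]; have [] := H1' i iN Ti; by [].
  move=> i j iN jN /andP[Ti _] /andP[Tj _]; exact: H2'.
have L2 : \sum_(0 <= i < N | T i && ~~ (v i <= u N)) l <= b - v N.
  apply: IH => //.
    move=> i iN /andP[Ti vU]; have [h1 h2 h3] := H1' i iN Ti; split => //.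
    have iNe : i <> N by move=> e; move: iN; rewrite e ltnn.
    case: (H2 i N (ltnW iN) (ltnSn N) Ti TN iNe) => [vu|//].
    by rewrite vu in vU.
  move=> i j iN jN /andP[Ti _] /andP[Tj _]; exact: H2'.
lra.
Qed.
End F.
Section F2.
Variable R : realType.
Lemma partition_sum (N M : nat) (T : pred nat) (a : nat -> nat) (f : nat -> R) :
  (forall i, (i < N)%N -> T i -> (a i < M)%N) ->
  \sum_(0 <= i < N | T i) f i = \sum_(0 <= j < M) \sum_(0 <= i < N | T i && (a i == j)) f i.
Proof.
elim: N => [|N IH] H.
  by rewrite big_geq // big1 // => j _; rewrite big_geq.
rewrite big_mkcond big_nat_recr //= -big_mkcond IH; last first.
  by move=> i iN; apply: H; rewrite ltnS ltnW.
under [X in _ = X]eq_bigr => j _ do rewrite big_mkcond big_nat_recr //= -big_mkcond.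
rewrite big_split /=; congr (_ + _).
case: ifP => TN /=; last by rewrite big1.
have aM := H N (ltnSn N) TN.
rewrite (bigD1_seq (a N)) /= ?mem_index_iota ?iota_uniq // eqxx big1 ?addr0 //.
by move=> j /negbTE; rewrite eq_sym => ->.
Qed.
End F2.

Section B.
Variable R : realType.

Lemma sep_of_disj (I J : R * R) : I.1 < I.2 -> J.1 < J.2 ->
  open_itv I `&` open_itv J = set0 -> I.2 <= J.1 \/ J.2 <= I.1.
Proof.
move=> hI hJ d; case: (leP I.2 J.1) => h1; first by left.
case: (leP J.2 I.1) => h2; first by right.
exfalso.
have [x [x1 x2]] : exists x, I.1 < x < I.2 /\ J.1 < x < J.2.
  case: (leP I.1 J.1) => a1; case: (leP I.2 J.2) => a2.
  - exists ((J.1 + I.2) / 2); split; apply/andP; split; lra.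
  - exists ((J.1 + J.2) / 2); split; apply/andP; split; lra.
  - exists ((I.1 + I.2) / 2); split; apply/andP; split; lra.
  - exists ((I.1 + J.2) / 2); split; apply/andP; split; lra.
have : (open_itv I `&` open_itv J) x by split.
by rewrite d.
Qed.

Variable G : set R.
Hypothesis G01 : G `<=` [set x | 0 <= x <= 1].
Variable P : nat -> option (R * R).
Hypothesis HP1 : forall i I, P i = Some I -> I.1 < I.2 /\ open_itv I `&` G !=set0.
Hypothesis HP2 : forall i j I J, i <> j -> P i = Some I -> P j = Some J ->
  open_itv I `&` open_itv J = set0.

Lemma PS h k (p : nat -> R) N (T : pred nat) : 0 < h ->
  (forall x, G x -> h <= x <= 1 - h -> exists2 j, (j < k)%N & `|x - p j| < 2 * h) ->
  (forall i, T i -> exists2 I, P i = Some I & h / 2 < I.2 - I.1 <= h) ->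
  \sum_(0 <= i < N | T i) (1 : R) <= 12 * (k.+2)%:R.
Proof.
move=> h0 cov HT.
pose I i := odflt (0, 0) (P i).
pose x i := xget 0 (open_itv (I i) `&` G).
have TI i : T i -> P i = Some (I i) /\ h / 2 < (I i).2 - (I i).1 <= h.
  by move=> /HT [J PJ hJ]; rewrite /I PJ.
have Tx i : T i -> open_itv (I i) (x i) /\ G (x i).
  move=> /TI [PI _]; have [_ ne] := HP1 _ _ PI.
  exact: (xgetPex 0 ne).
pose a i := if x i < h then k else if 1 - h < x i then k.+1
            else xget 0%N [set j | (j < k)%N /\ `|x i - p j| < 2 * h].
pose c j := if (j < k)%N then p j else if j == k then 0 else 1.
have Ha i : T i -> (a i < k.+2)%N /\ `|x i - c (a i)| < 2 * h.
  move=> Ti; have [/andP[x1 x2] Gx] := Tx i Ti.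
  rewrite /a; case: ifP => xh.
    have /andP[g1 g2] := G01 _ Gx.
    rewrite /c ltnn eqxx subr0 ltnS leqnSn; split => //.
    by rewrite ger0_norm //; lra.
  case: ifP => xh'.
    have /andP[g1 g2] := G01 _ Gx.
    rewrite /c (_ : (k.+1 < k)%N = false); last by rewrite ltnNge leqnSn.
    rewrite (gtn_eqF (ltnSn k)) ltnSn.
    by split => //; rewrite ler0_norm; lra.
  have hx : h <= x i <= 1 - h by apply/andP; split; rewrite leNgt ?xh ?xh'.
  have ex : exists j, (j < k)%N /\ `|x i - p j| < 2 * h.
    by have [j jk hj] := cov _ Gx hx; exists j.
  have := xgetPex 0%N ex; rewrite /= => -[jk hj].
  split; first by apply: (ltn_trans jk); rewrite ltnS leqnSn.
  by rewrite /c jk.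
have fib j : \sum_(0 <= i < N | T i && (a i == j)) (1 : R) <= 12.
  have := @fiber R N (fun i => T i && (a i == j)) (fun i => (I i).1) (fun i => (I i).2)
    (h / 2) (c j - 3 * h) (c j + 3 * h).
  move=> H.
  have : h / 2 * \sum_(0 <= i < N | T i && (a i == j)) 1 <= h / 2 * 12.
    rewrite mulr_sumr; under eq_bigr do rewrite mulr1.
    apply: le_trans (H _ _ _ _) _.
    - by rewrite divr_gt0.
    - lra.
    - move=> i _ /andP[Ti /eqP aij]; have [/andP[x1 x2] _] := Tx i Ti.
      have [_ /andP[l1 l2]] := TI i Ti; have [_] := Ha i Ti; rewrite aij => hc.
      move: hc; rewrite ltr_norml => /andP[c1 c2]; split; lra.
    - move=> i1 i2 _ _ /andP[T1 _] /andP[T2 _] ne.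
      have [P1 _] := TI i1 T1; have [P2 _] := TI i2 T2.
      apply: sep_of_disj; [exact: (HP1 _ _ P1).1 | exact: (HP1 _ _ P2).1 |].
      exact: HP2 ne P1 P2.
    - lra.
  by rewrite ler_pM2l // divr_gt0.
rewrite (@partition_sum R N k.+2 T a) //; last by move=> i _ Ti; case: (Ha i Ti).
apply: le_trans (_ : \sum_(0 <= j < k.+2) (12 : R) <= _).
  by apply: ler_sum => j _; apply: fib.
by rewrite sumr_const_nat subn0 mulr_natr.
Qed.
End B.

Section Main.
Variable R : realType.
Local Open Scope ereal_scope.
Variables (Phi : set (R * R)) (C : R).
Hypothesis C0 : (0 < C)%R.
Hypothesis H3 : forall a b : R, (0 <= a)%R -> (a < b)%R -> (b <= 1)%R ->
     exists c d : R, [/\ Phi (c, d),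
       (c < (a + b) / 2 < d)%R,
       (a <= c)%R /\ (d <= b)%R &
       ((b - a) / (d - c) <= C)%R].

Definition Dprop (a b : R) (I : R * R) := [/\ Phi I,
       (I.1 < (a + b) / 2 < I.2)%R,
       (a <= I.1)%R /\ (I.2 <= b)%R &
       ((b - a) / (I.2 - I.1) <= C)%R].

Lemma exD : exists D : R -> R -> R * R, forall a b, (0 <= a)%R -> (a < b)%R -> (b <= 1)%R ->
  Dprop a b (D a b).
Proof.
have : forall ab : R * R, exists I : R * R,
    (0 <= ab.1)%R -> (ab.1 < ab.2)%R -> (ab.2 <= 1)%R -> Dprop ab.1 ab.2 I.
  move=> [a b] /=; have [h|h] := pselect ((0 <= a)%R /\ (a < b)%R /\ (b <= 1)%R).
    case: h => h1 [h2 h3]; have [c [d H]] := H3 a b h1 h2 h3; by exists (c, d).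
  by exists (0%R, 0%R) => h1 h2 h3; exfalso; apply: h.
move=> /choice [f Hf]; exists (fun a b => f (a, b)) => a b h1 h2 h3.
exact: (Hf (a, b)).
Qed.


Definition D (a b : R) := xget (0%R, 0%R) [set I | Dprop a b I].

Lemma DP a b : (0 <= a)%R -> (a < b)%R -> (b <= 1)%R -> Dprop a b (D a b).
Proof.
move=> h1 h2 h3; apply: (xgetPex (0%R, 0%R) (P := [set I | Dprop a b I])).
by have [c [d H]] := H3 a b h1 h2 h3; exists (c, d).
Qed.

Definition cfg (G : set R) (h : R) (p : nat -> R) (k : nat) :=
 (forall i, (i < k)%N -> G (p i) /\ (h <= p i <= 1 - h)%R) /\
 (forall i j, (i < k)%N -> (j < k)%N -> i <> j -> (2 * h <= `|p i - p j|)%R).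

Lemma stepA G h p k (al e : R) : (0 < h)%R -> (2 * h <= e)%R -> (0 <= al)%R ->
  cfg G h p k -> ((k%:R * (2 * h / C) `^ al)%:E <= Peps Phi al e G).
Proof.
move=> h0 he al0 [cf1 cf2].
set Q := fun i => if (i < k)%N then Some (D (p i - h) (p i + h)) else None.
have Hi i : (i < k)%N -> Dprop (p i - h) (p i + h) (D (p i - h) (p i + h)).
  move=> ik; have [_ /andP[c1 c2]] := cf1 i ik.
  by apply: DP; lra.
have mid i : ((p i - h + (p i + h)) / 2 = p i)%R.
  by lra.
have Hin i x : (i < k)%N -> open_itv (D (p i - h) (p i + h)) x -> (`|x - p i| < h)%R.
  move=> ik /andP[x1 x2]; have [_ _ [d1 d2] _] := Hi i ik.
  rewrite ltr_norml; apply/andP; split; lra.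
have pack : unc_packing Phi G e Q.
  split.
    move=> i I; rewrite /Q; case: ifP => // ik [<-].
    have [d1 /andP[d2 d3] [d4 d5] _] := Hi i ik.
    split => //; first exact: lt_trans d3.
      lra.
    exists (p i); split; last by have [] := cf1 i ik.
    by rewrite mid in d2 d3; rewrite /open_itv /= d2.
  move=> i j I J ij; rewrite /Q; case: ifP => // ik [<-]; case: ifP => // jk [<-].
  apply/seteqP; split => // x [xi xj].
  have := cf2 i j ik jk ij; rewrite leNgt => /negP; apply.
  have := Hin i x ik xi; have := Hin j x jk xj => hj hi.
  rewrite (_ : p i - p j = (x - p j) - (x - p i))%R; last by lra.
  by apply: le_lt_trans (ler_normB _ _) _; lra.
apply: le_trans (_ : packing_sum al Q <= _); last first.
  by apply: le_ereal_sup_tmp; exists (packing_sum al Q) => //; exists Q.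
apply: le_trans (nneseries_lim_ge k _); last first.
  by move=> n _ _; case: (Q n) => // K; rewrite lee_fin powR_ge0.
set c := ((2 * h / C) `^ al)%R.
have -> : (k%:R * c = \sum_(0 <= i < k) c)%R by rewrite sumr_const_nat subn0 mulr_natl.
rewrite -sumEFin big_nat_cond [X in _ <= X]big_nat_cond; apply: lee_sum => i /andP[/andP[_ ik] _].
rewrite /Q ik lee_fin.
have [d1 /andP[d2 d3] [d4 d5] d6] := Hi i ik.
have dpos : (0 < (D (p i - h) (p i + h)).2 - (D (p i - h) (p i + h)).1)%R.
  by rewrite subr_gt0; exact: lt_trans d3.
have hC : (0 < 2 * h / C)%R by rewrite divr_gt0 // mulr_gt0.
apply: ge0_ler_powR => //; rewrite ?nnegrE ?(ltW hC) ?(ltW dpos) //.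
rewrite ler_pdivrMr //; move: d6; rewrite ler_pdivrMr // mulrC; lra.
Qed.

Lemma cfg_bound G h p k (al e L : R) : (0 < h)%R -> (2 * h <= e)%R -> (0 <= al)%R ->
  Peps Phi al e G <= L%:E -> cfg G h p k -> (k%:R <= L / (2 * h / C) `^ al)%R.
Proof.
move=> h0 he al0 PL c.
have := le_trans (stepA _ _ _ _ _ _ h0 he al0 c) PL; rewrite lee_fin => H.
have hC : (0 < (2 * h / C) `^ al)%R by apply: powR_gt0; rewrite divr_gt0 // mulr_gt0.
by rewrite ler_pdivlMr.
Qed.

Lemma maxcfg G h (al e L : R) : (0 < h)%R -> (2 * h <= e)%R -> (0 <= al)%R ->
  Peps Phi al e G <= L%:E -> exists k p, [/\ cfg G h p k,
   (k%:R <= L / (2 * h / C) `^ al)%R &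
   forall x, G x -> (h <= x <= 1 - h)%R -> exists2 j, (j < k)%N & (`|x - p j| < 2 * h)%R].
Proof.
move=> h0 he al0 PL.
set Qb := fun n => `[< exists p, cfg G h p n >].
have ex0 : exists n, Qb n by exists 0%N; apply/asboolP; exists (fun=> 0%R); split.
set X := (L / (2 * h / C) `^ al)%R.
have ub : forall n, Qb n -> (n <= Num.trunc X)%N.
  move=> n /asboolP [p c]; have := cfg_bound _ _ _ _ _ _ _ h0 he al0 PL c => nX.
  rewrite -ltnS; have := truncnS_gt X => lt.
  by rewrite -(ltr_nat R); apply: le_lt_trans lt.
case: (ex_maxnP ex0 ub) => k /asboolP [p c] kmax.
exists k, p; split => //; first exact: cfg_bound _ _ _ _ _ _ _ h0 he al0 PL c.
move=> x Gx hx.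
have [//|nex] := pselect (exists2 j, (j < k)%N & (`|x - p j| < 2 * h)%R).
set p' := fun i => if i == k then x else p i.
have : Qb k.+1.
  apply/asboolP; exists p'; case: c => c1 c2; split.
    move=> i ik; rewrite /p'; case: eqP => [//|ne]; apply: c1.
    by rewrite ltn_neqAle -ltnS ik andbT; apply/eqP.
  have other j : (j < k)%N -> (2 * h <= `|x - p j|)%R.
    move=> jk; rewrite leNgt; apply/negP => lt; apply: nex; by exists j.
  move=> i j ik jk ij; rewrite /p'.
  case: eqP => [ei|ni]; case: eqP => [ej|nj].
  - by exfalso; apply: ij; rewrite ei ej.
  - apply: other; by rewrite ltn_neqAle -ltnS jk andbT; apply/eqP.
  - rewrite distrC; apply: other; by rewrite ltn_neqAle -ltnS ik andbT; apply/eqP.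
  - apply: c2 => //; by rewrite ltn_neqAle -ltnS ?ik ?jk andbT; apply/eqP.
by move=> /kmax; rewrite ltnn.
Qed.

Definition lenP (Pk : nat -> option (R * R)) i :=
  ((odflt (0, 0) (Pk i)).2 - (odflt (0, 0) (Pk i)).1)%R.
Definition wP (b : R) (Pk : nat -> option (R * R)) i :=
  if Pk i is Some K then ((K.2 - K.1) `^ b)%R else 0%R.
Definition q : R := 2^-1.

Lemma powR_exprn (x c : R) n : (0 <= x)%R -> ((x ^+ n) `^ c = (x `^ c) ^+ n)%R.
Proof. by move=> x0; rewrite -!powR_mulrn ?powR_ge0 // -!powRrM mulrC. Qed.

Lemma q_gt0 : (0 < q)%R. Proof. by rewrite /q invr_gt0. Qed.
Lemma q_lt1 : (q < 1)%R. Proof. by rewrite /q invf_lt1 // ltr1n. Qed.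

Lemma scale_bound (G : set R) (Pk : nat -> option (R * R)) (a b e0 L : R) (N n : nat)
    (sc : nat -> nat) :
  G `<=` [set x | (0 <= x <= 1)%R] ->
  (forall i I, Pk i = Some I -> (I.1 < I.2)%R /\ open_itv I `&` G !=set0) ->
  (forall i j I J, i <> j -> Pk i = Some I -> Pk j = Some J ->
     open_itv I `&` open_itv J = set0) ->
  (0 <= a)%R -> (a < b)%R -> Peps Phi a e0 G <= L%:E -> (2 * q ^+ n <= e0)%R ->
  (forall i, isSome (Pk i) -> sc i == n -> (q ^+ n.+1 < lenP Pk i <= q ^+ n)%R) ->
  (\sum_(0 <= i < N | isSome (Pk i) && (sc i == n)) wP b Pk i <=
    12 * L / (2 / C) `^ a * (q `^ (b - a)) ^+ n + 24 * (q `^ b) ^+ n)%R.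
Proof.
move=> G01 HP1 HP2 a0 ab PL he Hsc.
set h := (q ^+ n)%R.
have h0 : (0 < h)%R by rewrite exprn_gt0 // q_gt0.
have [k [p [c kb cov]]] := maxcfg G h a e0 L h0 he a0 PL.
set T := fun i => isSome (Pk i) && (sc i == n).
have HT i : T i -> exists2 I, Pk i = Some I & (h / 2 < I.2 - I.1 <= h)%R.
  move=> /andP[sP sn]; have := Hsc i sP sn; rewrite /lenP.
  case: (Pk i) sP => // I _ /= hI; exists I => //.
  by rewrite exprS mulrC in hI.
have cnt := @PS R G G01 Pk HP1 HP2 h k p N T h0 cov HT.
have b0 : (0 <= b)%R by apply: le_trans (ltW ab).
apply: (@le_trans _ _ (\sum_(0 <= i < N | T i) h `^ b)%R).
  apply: ler_sum => i /andP[sP sn]; have /andP[l1 l2] := Hsc i sP sn.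
  move: l1 l2; rewrite /wP /lenP; case: (Pk i) sP => // I _ /= l1 l2.
  apply: ge0_ler_powR => //; rewrite nnegrE ?ltW //.
  by apply: lt_trans l1; rewrite exprn_gt0 // q_gt0.
have -> : (\sum_(0 <= i < N | T i) h `^ b = h `^ b * \sum_(0 <= i < N | T i) 1)%R.
  by rewrite mulr_sumr; apply: eq_bigr => *; rewrite mulr1.
apply: le_trans (ler_wpM2l (powR_ge0 _ _) cnt) _.
have kb' : (12 * k.+2%:R <= 12 * (L / (2 * h / C) `^ a + 2))%R.
  by rewrite ler_pM2l // -addn2 natrD lerD.
apply: le_trans (ler_wpM2l (powR_ge0 _ _) kb') _.
rewrite -!powR_exprn ?(ltW q_gt0) // -/h.
have hC : (2 * h / C = (2 / C) * h)%R by rewrite mulrAC.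
rewrite hC powRM ?(ltW h0) ?divr_ge0 ?(ltW C0) // powRB; last first.
  by rewrite implybE (gt_eqF h0) orbT.
have Z0 : ((2 / C) `^ a != 0)%R by rewrite gt_eqF // powR_gt0 // divr_gt0.
have Y0 : (h `^ a != 0)%R by rewrite gt_eqF // powR_gt0.
rewrite le_eqVlt; apply/orP; left; apply/eqP; field.
by rewrite Z0 Y0.
Qed.

End Main.
Section X.
Variable R : realType.
Lemma ev_small (r : R) : (0 < r)%R -> exists N, forall n, (N <= n)%N -> ((q R) ^+ n < r)%R.
Proof.
move=> r0.
have qn : `|q R| < 1 by rewrite ger0_norm ?q_lt1 // ltW // q_gt0.
move: (cvg_expr qn) => /cvgr_lt /(_ r r0) [N _ HN]; exists N => n Nn; exact: HN.
Qed.

Lemma ev_small_gen (rho r : R) : (0 <= rho)%R -> (rho < 1)%R -> (0 < r)%R ->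
  exists N, forall n, (N <= n)%N -> (rho ^+ n < r)%R.
Proof.
move=> r0 r1 rpos.
have qn : `|rho| < 1 by rewrite ger0_norm.
move: (cvg_expr qn) => /cvgr_lt /(_ r rpos) [N _ HN]; exists N => n Nn; exact: HN.
Qed.

Lemma ev_geo (rho c eta : R) : (0 <= rho)%R -> (rho < 1)%R -> (0 <= c)%R -> (0 < eta)%R ->
  exists N, forall n, (N <= n)%N -> (c * rho ^+ n / (1 - rho) <= eta)%R.
Proof.
move=> r0 r1 c0 e0.
have d0 : (0 < 1 - rho)%R by rewrite subr_gt0.
have pos : (0 < eta * (1 - rho) / (c + 1))%R.
  by rewrite divr_gt0 ?mulr_gt0 // ltr_wpDl.
have [N HN] := ev_small_gen _ _ r0 r1 pos.
exists N => n Nn; have := HN n Nn => h.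
rewrite ler_pdivrMr //.
apply: le_trans (_ : c * (eta * (1 - rho) / (c + 1)) <= _)%R.
  by rewrite ler_wpM2l // ltW.
set X := (eta * (1 - rho))%R.
have X0 : (0 <= X)%R by rewrite mulr_ge0 // ltW.
rewrite mulrA ler_pdivrMr ?ltr_wpDl //; nra.
Qed.

Lemma scale_ex (r : R) : (0 < r)%R -> (r <= 1)%R -> exists n, ((q R) ^+ n.+1 < r <= (q R) ^+ n)%R.
Proof.
move=> r0 r1; have [N HN] := ev_small _ r0.
have ex : exists n, ((q R) ^+ n.+1 < r)%R by exists N; apply: HN; rewrite leqnSn.
case: (ex_minnP ex) => m hm mmin; exists m; rewrite hm /=.
case: m hm mmin => [|m] hm mmin; first by rewrite expr0.
rewrite leNgt; apply/negP => lt; have := mmin m lt; by rewrite ltnn.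
Qed.

Lemma geo_tail (rho : R) n0 M : (0 <= rho)%R -> (rho < 1)%R ->
  (\sum_(0 <= n < M | (n0 <= n)%N) rho ^+ n <= rho ^+ n0 / (1 - rho))%R.
Proof.
move=> r0 r1; have d0 : (0 < 1 - rho)%R by rewrite subr_gt0.
suff : (\sum_(0 <= n < M | (n0 <= n)%N) rho ^+ n <= (rho ^+ n0 - rho ^+ (maxn M n0)) / (1 - rho))%R.
  move=> /le_trans; apply; rewrite ler_pdivrMr // divfK ?gt_eqF //.
  by rewrite gerBl exprn_ge0.
elim: M => [|M IH].
  by rewrite big_geq // max0n subrr mul0r.
rewrite big_mkcond big_nat_recr //= -big_mkcond.
case: ifP => nM.
  rewrite (maxn_idPl nM) in IH; rewrite (maxn_idPl (leqW nM)).
  apply: le_trans (lerD IH (lexx _)) _.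
  rewrite le_eqVlt; apply/orP; left; apply/eqP; rewrite exprS; field.
  by rewrite gt_eqF.
have Mn : (M < n0)%N by rewrite ltnNge nM.
rewrite addr0; move: IH; rewrite (maxn_idPr (ltnW Mn)) (maxn_idPr Mn) //.
Qed.

End X.

Section Main2.
Variable R : realType.
Local Open Scope ereal_scope.
Variables (Phi : set (R * R)) (C : R).
Hypothesis C0 : (0 < C)%R.
Hypothesis H3 : forall a b : R, (0 <= a)%R -> (a < b)%R -> (b <= 1)%R ->
     exists c d : R, [/\ Phi (c, d),
       (c < (a + b) / 2 < d)%R,
       (a <= c)%R /\ (d <= b)%R &
       ((b - a) / (d - c) <= C)%R].

Lemma KL (a b : R) (G : set R) : G `<=` [set x | (0 <= x <= 1)%R] ->
  (0 <= a)%R -> (a < b)%R -> P0 Phi a G < +oo -> P0 all_itvs b G = 0.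
Proof.
move=> G01 a0 ab Pfin.
have [e0 e0pos Pe0] : exists2 e0 : R, (0 < e0)%R & Peps Phi a e0 G < +oo.
  by move: Pfin; rewrite P0E => /ereal_inf_lt [_ [e e0 <-] lt]; exists e.
set L := fine (Peps Phi a e0 G).
have PL : Peps Phi a e0 G <= L%:E.
  by rewrite /L fineK // ge0_fin_numE // Peps_ge0.
have L0 : (0 <= L)%R by rewrite /L fine_ge0 // Peps_ge0.
have qg0 := q_gt0 R; have ql1 := q_lt1 R.
set rho1 := ((q R) `^ (b - a))%R; set rho2 := ((q R) `^ b)%R.
have b0 : (0 < b)%R by apply: le_lt_trans ab.
have lt1 (c : R) : (0 < c)%R -> ((q R) `^ c < 1)%R.
  move=> c0.
  have h1 : q R \in Num.nneg by rewrite nnegrE ltW.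
  have h2 : (1%R : R) \in Num.nneg by rewrite nnegrE.
  by have := @gt0_ltr_powR R c c0 (q R) 1%R h1 h2 ql1; rewrite powR1.
have r11 : (rho1 < 1)%R by rewrite /rho1; apply: lt1; rewrite subr_gt0.
have r21 : (rho2 < 1)%R by rewrite /rho2; apply: lt1.
have r10 : (0 <= rho1)%R by apply: powR_ge0.
have r20 : (0 <= rho2)%R by apply: powR_ge0.
set A := (12 * L / (2 / C) `^ a)%R.
have A0 : (0 <= A)%R by rewrite divr_ge0 ?powR_ge0 // mulr_ge0.
apply/eqP; rewrite eq_le P0_ge0 andbT; apply/lee_addgt0Pr => eta eta0; rewrite add0e.
have eta2 : (0 < eta / 2)%R by rewrite divr_gt0.
have [N1 HN1] := @ev_geo R _ _ _ r10 r11 A0 eta2.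
have [N2 HN2] := @ev_geo R _ 24%R _ r20 r21 (ler0n _ 24) eta2.
have e02 : (0 < e0 / 2)%R by rewrite divr_gt0.
have [N3 HN3] := @ev_small R (e0 / 2)%R e02.
set n0 := maxn N1 (maxn N2 N3).
have n01 : (N1 <= n0)%N by rewrite leq_maxl.
have n02 : (N2 <= n0)%N by rewrite /n0 maxnCA leq_maxl.
have n03 : (N3 <= n0)%N by rewrite /n0 maxnA leq_maxr.
set eps := ((q R) ^+ n0)%R.
have eps0 : (0 < eps)%R by rewrite exprn_gt0.
have eps1 : (eps <= 1)%R by rewrite exprn_ile1 // ltW.
rewrite P0E; apply: ge_ereal_inf; exists (Peps all_itvs b eps G); first by exists eps.
apply/ereal_supP => _ [Pk [pk1 pk2] <-].
have HP1 i I : Pk i = Some I -> (I.1 < I.2)%R /\ open_itv I `&` G !=set0.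
  by move=> /pk1 [].
rewrite /packing_sum; apply: lime_le.
  by apply: is_cvg_nneseries => n _ _; case: (Pk n) => // K; rewrite lee_fin powR_ge0.
apply: nearW => N.
have -> : \sum_(0 <= i < N) (match Pk i with Some K => ((K.2 - K.1) `^ b)%:E | None => 0%E end)
  = (\sum_(0 <= i < N) @wP R b Pk i)%:E.
  by rewrite -sumEFin; apply: eq_bigr => i _; rewrite /wP; case: (Pk i).
rewrite lee_fin.
pose sc i := xget 0%N [set n | ((q R) ^+ n.+1 < @lenP R Pk i <= (q R) ^+ n)%R].
have Hsc i : isSome (Pk i) -> ((q R) ^+ (sc i).+1 < @lenP R Pk i <= (q R) ^+ (sc i))%R.
  move=> sP; apply: (xgetPex 0%N (P := [set n | ((q R) ^+ n.+1 < @lenP R Pk i <= (q R) ^+ n)%R])).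
  rewrite /lenP; case E : (Pk i) sP => [I|//] _ /=.
  have [_ h1 h3 _] := pk1 i I E.
  apply: (@scale_ex R (I.2 - I.1)%R); [by rewrite subr_gt0 | exact: le_trans h3 eps1].
have sc_ge i : isSome (Pk i) -> (n0 <= sc i)%N.
  move=> sP; rewrite leqNgt; apply/negP => lt.
  have /andP[l1 _] := Hsc i sP.
  have : (@lenP R Pk i <= eps)%R.
    rewrite /lenP; case E : (Pk i) sP => [I|//] _ /=; by have [] := pk1 i I E.
  rewrite leNgt => /negP; apply; apply: le_lt_trans l1.
  by rewrite /eps ler_wiXn2l // ltW.
have -> : (\sum_(0 <= i < N) @wP R b Pk i = \sum_(0 <= i < N | isSome (Pk i)) @wP R b Pk i)%R.
  by rewrite [RHS]big_mkcond; apply: eq_bigr => i _; rewrite /wP; case: (Pk i).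
set M := (\max_(i < N) sc i).+1.
rewrite (@partition_sum R N M _ sc); last first.
  by move=> i iN _; rewrite ltnS (@leq_bigmax _ (fun j : 'I_N => sc j) (Ordinal iN)).
apply: (@le_trans _ _ (\sum_(0 <= n < M)
   (if (n0 <= n)%N then A * rho1 ^+ n + 24 * rho2 ^+ n else 0))%R).
  apply: ler_sum => n _; case: ifP => nn; last first.
    rewrite big1 // => i /andP[sP /eqP sn]; exfalso.
    by move: (sc_ge i sP); rewrite sn nn.
  apply: (@scale_bound R Phi C C0 H3 G Pk a b e0 L N n sc G01 HP1 pk2 a0 ab PL).
    apply: le_trans (_ : 2 * (e0 / 2) <= _)%R; last by rewrite mulrC divfK.
    rewrite ler_pM2l // ltW // HN3 //; exact: leq_trans nn.
  by move=> i sP /eqP sn; rewrite -sn; apply: Hsc.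
rewrite -big_mkcond /= big_split /= -!mulr_sumr.
apply: le_trans (lerD (ler_wpM2l A0 (@geo_tail R _ n0 M r10 r11))
                     (ler_wpM2l (_ : 0 <= 24)%R (@geo_tail R _ n0 M r20 r21))) _ => //.
rewrite !mulrA (splitr eta); apply: lerD; [exact: HN1 | exact: HN2].
Qed.
Lemma dir2 (a b : R) E : E `<=` [set x | (0 <= x <= 1)%R] ->
  (0 <= a)%R -> (a < b)%R -> Pmeas Phi a E = 0 -> Pmeas all_itvs b E = 0.
Proof.
move=> E01 a0 ab PE; apply/eqP; rewrite eq_le Pmeas_ge0 andbT.
have : Pmeas Phi a E < 1 by rewrite PE.
move=> /ereal_inf_lt [_ [F FE <-] Flt].
have Ffin j : P0 Phi a (F j) < +oo.
  have := @term_le_series R (fun j => P0 Phi a (F j)) j (fun n => P0_ge0 _ _ _ _).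
  move=> /le_lt_trans/(_ Flt) h; exact: lt_trans h (ltry _).
set G := fun j => F j `&` [set x | (0 <= x <= 1)%R].
apply: ge_ereal_inf; exists (\sum_(0 <= j <oo) P0 all_itvs b (G j)).
  by exists G => // x Ex; have [j _ Fj] := FE x Ex; exists j => //; split => //; apply: E01.
rewrite eseries0 // => j _ _.
apply: (@KL a b (G j)) => //; first by move=> x [].
by apply: le_lt_trans (Ffin j); apply: P0_mono => // x [].
Qed.

End Main2.

Theorem theorem5 (R : realType) (Phi : set (R * R)) (C : R) :
  0 < C ->
  (forall I, Phi I -> 0 <= I.1 /\ I.1 < I.2 /\ I.2 <= 1) ->
  (forall a b : R, 0 <= a -> a < b -> b <= 1 ->
     exists c d : R, [/\ Phi (c, d),
       c < (a + b) / 2 < d,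
       a <= c /\ d <= b &
       (b - a) / (d - c) <= C]) ->
  forall E : set R, E `<=` [set x | 0 <= x <= 1] ->
  dimP Phi E = dimP_unc E.
Proof.
move=> C0 _ H3 E E01; apply/eqP; rewrite eq_le; apply/andP; split.
  apply/ereal_infP => _ [a [a0 Pa] <-]; apply: ge_ereal_inf.
  exists a%:E; last exact: lexx.
  exists a; last reflexivity.
  split; first exact: a0.
  apply/eqP; rewrite eq_le Pmeas_ge0 andbT -Pa; exact: Pmeas_mono.
apply/ereal_infP => _ [a [a0 Pa] <-].
apply/lee_addgt0Pr => e e0; rewrite -EFinD; apply: ge_ereal_inf.
exists (a + e)%:E; last exact: lexx.
exists (a + e); last reflexivity.
split; first by rewrite addr_ge0 // ltW.
apply: (@dir2 R Phi C C0 H3 a (a + e) E E01 a0 _ Pa); by rewrite ltrDl.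
Qed.
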